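(* For every $U\in\mathcal U_n$ there is exactly one sequence $w$ which is the area sequence of a Dyck path of length $n$ and such that $P(w)$ is isomorphic to $U$ as a poset; moreover this sequence equals $q(U)$.
   Context: A unit interval order on $\{1,\dots,n\}$ is a relation $\prec$ such that there are closed intervals $I_1,\dots,I_n$ of length $1$ in $\mathbb R$, numbered from left to right, with $i\prec j$ iff $I_i$ lies strictly to the left of $I_j$; $\mathcal U_n$ is the set of these. Area sequences of Dyck paths of length $n$ are the sequences $(a_1,\dots,a_n)$ of nonnegative integers with $a_1=0$ and $a_i\le a_{i-1}+1$. For a sequence $w=(w_1,\dots,w_n)$ of nonnegative integers, $P(w)$ is the poset on $\{1,\dots,n\}$ with $i\prec j$ iff $w_j-w_i\ge2$, or $w_j-w_i=1$ and $i<j$. Levels: $\ell(1)=0$ and $\ell(j)=\max_{i\prec j}\ell(i)+1$ for $j\ge2$, with $\ell(j)=0$ if no $i\prec j$. Algorithm: $q_1=(0)$; given $q_{i-1}$, let $C_i$ be the number of $k\prec i$ with $\ell(k)=\ell(i)-1$, and obtain $q_i$ by inserting a letter $\ell(i)$ into $q_{i-1}$ directly after the (possibly empty) run of letters $\ell(i)$ immediately following the $C_i$-th occurrence of the letter $\ell(i)-1$ (the 0-th occurrence meaning the start of the word); $q(U)=q_n$. *)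

(* Defs.v *)
From Stdlib Require Import Reals.
From mathcomp Require Import all_boot.

Set Implicit Arguments.
Unset Strict Implicit.
Unset Printing Implicit Defensive.

(* Elements 1..n of the paper are the ordinals 0..n-1 of 'I_n (shift by one). *)

(* A unit interval order on {1..n}: there are reals x_1 <= ... <= x_n
   (left endpoints of the unit intervals I_i = [x_i, x_i + 1], numbered from
   left to right) such that i < j in the order iff I_i lies strictly to the
   left of I_j, i.e. x_i + 1 < x_j. *)
Definition unit_interval_order (n : nat) (U : rel 'I_n) : Prop :=
  exists x : 'I_n -> R,
    (forall i j : 'I_n, i <= j -> Rle (x i) (x j)) /\
    (forall i j : 'I_n, U i j <-> Rlt (Rplus (x i) 1) (x j)).

Definition area_seq (n : nat) (w : seq nat) : Prop :=
  size w = n /\ (0 < n -> nth 0 w 0 = 0) /\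
  (forall i, 0 < i -> i < n -> nth 0 w i <= (nth 0 w i.-1).+1).

Definition Prel (w : seq nat) : rel nat := fun i j =>
  (nth 0 w i + 2 <= nth 0 w j) || ((nth 0 w j == (nth 0 w i).+1) && (i < j)).

Definition poset_iso (n : nat) (U : rel 'I_n) (P : rel nat) : Prop :=
  exists f : 'I_n -> 'I_n, bijective f /\
    forall i j : 'I_n, U i j = P (f i) (f j).

Definition Unat (n : nat) (U : rel 'I_n) : rel nat := fun i j =>
  match insub i, insub j with
  | Some i', Some j' => U i' j'
  | _, _ => false
  end.

(* Levels: l(j) = max_{i < j, i prec j} (l(i) + 1), or 0 if no such i.
   (For unit interval orders, i prec j forces i < j.) *)
Definition lev_next (R : rel nat) (s : seq nat) (j : nat) : nat :=
  \max_(i < j | R i j) (nth 0 s i).+1.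

Fixpoint levs (R : rel nat) (m : nat) : seq nat :=
  match m with
  | 0 => [::]
  | m'.+1 => let s := levs R m' in rcons s (lev_next R s m')
  end.

(* Position right after the c-th occurrence of letter b in q (0 if c = 0). *)
Fixpoint after_occ (b c : nat) (q : seq nat) : nat :=
  if c is 0 then 0 else
  match q with
  | [::] => 0
  | x :: q' => (after_occ b (if x == b then c.-1 else c) q').+1
  end.

(* Insert letter a directly after the run of a's immediately following the
   c-th occurrence of a - 1 (the 0-th occurrence being the start of q). *)
Definition insert_step (a c : nat) (q : seq nat) : seq nat :=
  let p0 := after_occ a.-1 c q in
  let p := p0 + find (fun x => x != a) (drop p0 q) in
  take p q ++ a :: drop p q.

Definition Ccount (R : rel nat) (L : seq nat) (i : nat) : nat :=
  count (fun k => R k i && (nth 0 L k == (nth 0 L i).-1)) (iota 0 i).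

(* qrec R L m = q_{m+1} (0-based element m). *)
Fixpoint qrec (R : rel nat) (L : seq nat) (m : nat) : seq nat :=
  match m with
  | 0 => [:: 0]
  | m'.+1 => insert_step (nth 0 L m'.+1) (Ccount R L m'.+1) (qrec R L m')
  end.

Definition qU (n : nat) (U : rel 'I_n) : seq nat :=
  qrec (Unat U) (levs (Unat U) n) n.-1.

(* Main.v *)
Require Import Defs.
From Stdlib Require Import Reals Lra FunctionalExtensionality.
From mathcomp Require Import all_boot zify.


Lemma after_occ0 b q : after_occ b 0 q = 0.
Proof. by case: q. Qed.

Lemma after_occ_cat b s t :
  after_occ b (count (pred1 b) s).+1 (s ++ b :: t) = (size s).+1.
Proof.
elim: s => [|x s IH]; first by rewrite /= eqxx after_occ0.
case: (eqVneq x b) => [->|ne] /=; first by rewrite eqxx /= IH.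
by rewrite (negbTE ne) /= add0n IH.
Qed.

Lemma find_all_eq (a : nat) (s t : seq nat) :
  all (pred1 a) s -> find (fun x => x != a) (s ++ t) = size s + find (fun x => x != a) t.
Proof.
move=> H; rewrite find_cat; have -> : has (fun x => x != a) s = false.
  by apply/negbTE; rewrite -all_predC; apply: sub_all H => x /= /eqP ->; rewrite eqxx.
by [].
Qed.

Lemma insert_pos (a : nat) (s1 s2 t : seq nat) :
  0 < a -> all (pred1 a) s2 -> find (fun x => x != a) t = 0 ->
  insert_step a (count (pred1 a.-1) s1).+1 (s1 ++ a.-1 :: s2 ++ t)
  = s1 ++ a.-1 :: s2 ++ a :: t.
Proof.
move=> a0 H2 Ht; rewrite /insert_step after_occ_cat.
have -> : drop (size s1).+1 (s1 ++ a.-1 :: s2 ++ t) = s2 ++ t.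
  by rewrite -cat_rcons drop_size_cat // size_rcons.
rewrite find_all_eq // Ht addn0.
have -> : (size s1).+1 + size s2 = size (rcons s1 a.-1 ++ s2) by rewrite size_cat size_rcons.
have E : s1 ++ a.-1 :: s2 ++ t = (rcons s1 a.-1 ++ s2) ++ t by rewrite -catA cat_rcons.
by rewrite E take_size_cat // drop_size_cat // -catA cat_rcons.
Qed.

Lemma insert_zero (a : nat) (s2 t : seq nat) :
  all (pred1 a) s2 -> find (fun x => x != a) t = 0 ->
  insert_step a 0 (s2 ++ t) = s2 ++ a :: t.
Proof.
move=> H2 Ht; rewrite /insert_step after_occ0 drop0 find_all_eq // Ht addn0.
by rewrite take_size_cat // drop_size_cat.
Qed.

Lemma find_lt (a : nat) (t : seq nat) : all (fun x => x < a) t -> find (fun x => x != a) t = 0.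
Proof. by case: t => //= x t /andP[h _]; rewrite neq_ltn h. Qed.

Section Core.
Variables (n : nat) (w : seq nat).
Local Notation W k := (nth 0 w k).

Lemma last_occ (P : pred nat) p : (exists2 k, k < p & P k) ->
  exists q, [/\ q < p, P q & forall k, q < k -> k < p -> ~~ P k].
Proof.
elim: p => [[k]//|p IH [k kp Pk]].
case Pp: (P p); first by exists p; split=> // j h1 h2; lia.
have [|q [q1 q2 q3]] := IH.
  exists k => //; case: (ltngtP k p) => //; [lia | by move=> e; rewrite -e Pk in Pp].
exists q; split=> //; first lia.
move=> j h1 h2; case: (ltngtP j p) => [h|h|->]; [exact: q3|lia|by rewrite Pp].
Qed.

Definition keylt (a b : nat) := (W a < W b) || ((W a == W b) && (a < b)).

Lemma keylt_trans {a b c} : keylt a b -> keylt b c -> keylt a c.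
Proof. rewrite /keylt; case/orP=> [h|/andP[/eqP h h']]; case/orP=> [g|/andP[/eqP g g']]; lia. Qed.

Lemma keylt_irr a : keylt a a = false.
Proof. by rewrite /keylt ltnn eqxx ltnn. Qed.

Lemma keylt_total {a b} : a != b -> keylt a b || keylt b a.
Proof. rewrite /keylt => /eqP h; lia. Qed.

Definition rkn a := count (keylt^~ a) (iota 0 n).

Lemma count_lt_strict (P Q : pred nat) s x :
  (forall y, P y -> Q y) -> x \in s -> Q x -> ~~ P x -> count P s < count Q s.
Proof.
move=> PQ; elim: s => //= y s IH; rewrite inE; case/orP=> [/eqP<-|xs] Qx Px.
  by rewrite Qx (negbTE Px) /= add0n add1n ltnS sub_count.
have := IH xs Qx Px; case Py: (P y); first by rewrite (PQ _ Py); lia.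
case: (Q y); lia.
Qed.

Lemma rkn_lt {a} : a < n -> rkn a < n.
Proof.
move=> an; rewrite /rkn -{2}(size_iota 0 n) -(count_predC (keylt^~ a)).
have : 0 < count (predC (keylt^~ a)) (iota 0 n).
  by rewrite -has_count; apply/hasP; exists a; rewrite ?mem_iota //= keylt_irr.
lia.
Qed.

Lemma rkn_mono {a b} : a < n -> keylt a b -> rkn a < rkn b.
Proof.
move=> an ab; apply: (@count_lt_strict _ _ _ a).
- by move=> y h; apply: keylt_trans h ab.
- by rewrite mem_iota.
- done.
- by rewrite keylt_irr.
Qed.

Lemma rkn_ltE a b : a < n -> b < n -> (rkn a < rkn b) = keylt a b.
Proof.
move=> an bn; apply/idP/idP; last exact: rkn_mono.
move=> h; case: (eqVneq a b) => [e|ne]; first by rewrite e ltnn in h.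
case/orP: (keylt_total ne) => // g; have := rkn_mono bn g; lia.
Qed.

Lemma rkn_inj {a b} : a < n -> b < n -> rkn a = rkn b -> a = b.
Proof.
move=> an bn e; apply/eqP; apply/negP => /negP ne.
case/orP: (keylt_total ne) => g; [have := rkn_mono an g|have := rkn_mono bn g]; lia.
Qed.

Definition rk (i : 'I_n) : 'I_n := Ordinal (rkn_lt (ltn_ord i)).

Lemma rk_inj : injective rk.
Proof. by move=> i j /(congr1 val) /= /rkn_inj e; apply/val_inj/e. Qed.

Definition posI : 'I_n -> 'I_n := invF rk_inj.

Lemma rk_pos i : rk (posI i) = i. Proof. exact: f_invF. Qed.
Lemma pos_rk i : posI (rk i) = i. Proof. exact: invF_f. Qed.

Definition posn (k : nat) : nat := oapp (fun o => val (posI o)) k (insub k).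

Lemma posnE (o : 'I_n) : posn o = posI o.
Proof. by rewrite /posn valK. Qed.

Lemma posn_lt {r} : r < n -> posn r < n.
Proof. by move=> h; rewrite (_ : r = Ordinal h) // posnE. Qed.

Lemma rkn_posn {r} : r < n -> rkn (posn r) = r.
Proof. by move=> h; rewrite (_ : r = Ordinal h) // posnE; exact: (congr1 val (rk_pos (Ordinal h))). Qed.

Lemma posn_rkn {k} : k < n -> posn (rkn k) = k.
Proof.
move=> h; by rewrite (_ : rkn k = rk (Ordinal h)) // posnE pos_rk.
Qed.

Definition Uw : rel 'I_n := fun i j => Prel w (posI i) (posI j).

Lemma Unat_ord (U : rel 'I_n) (i j : 'I_n) : Unat U i j = U i j.
Proof. by rewrite /Unat !valK. Qed.

Lemma Unat_Uw i j : i < n -> j < n -> Unat Uw i j = Prel w (posn i) (posn j).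
Proof.
move=> hi hj; rewrite (_ : i = Ordinal hi) // (_ : j = Ordinal hj) //.
by rewrite Unat_ord /Uw !posnE.
Qed.


Lemma Prel_key {x y} : Prel w x y -> keylt x y.
Proof. rewrite /Prel /keylt; case/orP=> [h|/andP[/eqP h h']]; lia. Qed.

Lemma Prel_W {x y} : Prel w x y -> W x < W y.
Proof. rewrite /Prel; case/orP=> [h|/andP[/eqP h h']]; lia. Qed.

Lemma Prel_down {x' x y} : Prel w x y -> keylt x' x || (x' == x) -> Prel w x' y.
Proof. rewrite /Prel /keylt; case/orP=> [h|/andP[/eqP h h']]; case/orP=> [/orP[g|/andP[/eqP g g']]|/eqP ->]; lia. Qed.

Lemma Prel_up {x y y'} : Prel w x y -> keylt y y' || (y == y') -> Prel w x y'.
Proof. rewrite /Prel /keylt; case/orP=> [h|/andP[/eqP h h']]; case/orP=> [/orP[g|/andP[/eqP g g']]|/eqP <-]; lia. Qed.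

Lemma rkn_pos (i : 'I_n) : rkn (posI i) = i.
Proof. exact: (congr1 val (rk_pos i)). Qed.

Lemma Uw_lt (i j : 'I_n) : Uw i j -> i < j.
Proof.
move/Prel_key => h; have := rkn_mono (ltn_ord (posI i)) h.
by rewrite !rkn_pos.
Qed.

Lemma pos_le {i j : 'I_n} : i <= j -> keylt (posI i) (posI j) || (val (posI i) == posI j).
Proof.
move=> ij; case: (eqVneq (val (posI i)) (posI j)) => [_|ne]; first by rewrite orbT.
case/orP: (keylt_total ne) => [->//|g].
have := rkn_mono (ltn_ord (posI j)) g; rewrite !rkn_pos; lia.
Qed.

Lemma Uw_down (k' k j : 'I_n) : k' <= k -> Uw k j -> Uw k' j.
Proof. by move=> h; rewrite /Uw => H; apply: Prel_down H (pos_le h). Qed.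

Lemma Uw_up (k j j' : 'I_n) : j <= j' -> Uw k j -> Uw k j'.
Proof. by move=> h; rewrite /Uw => H; apply: Prel_up H (pos_le h). Qed.

Lemma posn_inj a b : a < n -> b < n -> posn a = posn b -> a = b.
Proof. by move=> ha hb e; rewrite -(rkn_posn ha) -(rkn_posn hb) e. Qed.

Lemma perm_posn : perm_eq (map posn (iota 0 n)) (iota 0 n).
Proof.
apply: uniq_perm; last 1 first.
- move=> x; rewrite mem_iota /=; apply/mapP/idP.
    by case=> y; rewrite mem_iota /= => /posn_lt h ->.
  move=> h; exists (rkn x); last by rewrite posn_rkn.
  by rewrite mem_iota /= rkn_lt.
- rewrite map_inj_in_uniq ?iota_uniq // => a b; rewrite !mem_iota /=.
  exact: posn_inj.
- exact: iota_uniq.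
Qed.

Lemma count_posn (Q : pred nat) : count (fun k => Q (posn k)) (iota 0 n) = count Q (iota 0 n).
Proof. by rewrite -(permP perm_posn Q) count_map. Qed.

Hypothesis Hw : area_seq n w.

Lemma W0 : 0 < n -> W 0 = 0.
Proof. by case: Hw => _ [h _]. Qed.

Lemma Wstep {i} : 0 < i -> i < n -> W i <= (W i.-1).+1.
Proof. by case: Hw => _ [_ h]; apply: h. Qed.

Lemma interm k p v : k <= p -> p < n -> W k <= v -> v < W p ->
  exists2 k', k <= k' < p & W k' = v.
Proof.
elim: p => [|p IH] kp pn h1 h2.
  have k0 : k = 0 by lia.
  by subst k; lia.
case: (eqVneq k p.+1) => [e|ne]; first by subst k; lia.
have st : W p.+1 <= (W p).+1 := Wstep (ltn0Sn p) pn.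
case: (eqVneq v (W p)) => [e|ne2]; first by exists p => //; lia.
have [k' hk' e] : exists2 k', k <= k' < p & W k' = v by apply: IH; lia.
by exists k' => //; lia.
Qed.

Lemma size_levs R m : size (levs R m) = m.
Proof. by elim: m => //= m IH; rewrite size_rcons IH. Qed.

Lemma nth_levs R m {i} : i < m -> nth 0 (levs R m) i = lev_next R (levs R i) i.
Proof.
elim: m => // m IH; rewrite ltnS leq_eqVlt => /orP[/eqP->|h] /=.
  by rewrite nth_rcons size_levs ltnn eqxx.
by rewrite nth_rcons size_levs h IH.
Qed.

Local Notation R := (Unat Uw).
Local Notation L := (levs (Unat Uw) n).

Lemma levs_Uw {j} : j < n -> nth 0 L j = W (posn j).
Proof.
elim/ltn_ind: j => j IH jn; rewrite nth_levs // /lev_next.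
rewrite (eq_bigr (fun i : 'I_j => (W (posn i)).+1)); last first.
  move=> i _; have ij := ltn_ord i.
  rewrite nth_levs // -(@nth_levs R n i (ltn_trans ij jn)) IH //; lia.
apply/eqP; rewrite eqn_leq; apply/andP; split.
  apply/bigmax_leqP => i; rewrite Unat_Uw //; last by apply: ltn_trans (ltn_ord i) jn.
  exact: Prel_W.
set p := posn j; have pn : p < n by apply: posn_lt.
case: (posnP (W p)) => [->//|Wp].
have W00 : W 0 = 0 by apply: W0; lia.
have [k' hk' e] : exists2 k', 0 <= k' < p & W k' = (W p).-1.
  by apply: interm => //; lia.
have k'n : k' < n by lia.
have kp : keylt k' p by rewrite /keylt; apply/orP; left; lia.
have ij : rkn k' < j by rewrite -(rkn_posn jn); apply: rkn_mono.
have := @leq_bigmax_cond _ (fun i : 'I_j => R i j) (fun i : 'I_j => (W (posn i)).+1) (Ordinal ij).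
rewrite /= posn_rkn // e prednK //; apply.
rewrite Unat_Uw ?rkn_lt // posn_rkn // /Prel e; apply/orP; right.
by rewrite prednK // eqxx /=; lia.
Qed.

Definition cval p := if W p == 0 then 0 else count (fun k => W k == (W p).-1) (iota 0 p).

Lemma count_split (P : pred nat) {m k} : k <= m ->
  count P (iota 0 m) = count P (iota 0 k) + count P (iota k (m - k)).
Proof. by move=> h; rewrite -count_cat -{1}(subnKC h) iotaD. Qed.

Lemma count0 (P : pred nat) s : (forall x, x \in s -> ~~ P x) -> count P s = 0.
Proof. by move=> h; apply/eqP; rewrite eqn0Ngt -has_count; apply/hasPn. Qed.

Lemma Ccount_Uw {j} : j < n -> Ccount R L j = cval (posn j).
Proof.
move=> jn; set p := posn j; have pn : p < n by apply: posn_lt.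
pose Q x := Prel w x p && (W x == (W p).-1).
have E1 : Ccount R L j = count (fun k => Q (posn k)) (iota 0 j).
  rewrite /Ccount; apply: eq_in_count => k; rewrite mem_iota /= => kj.
  have kn : k < n by lia.
  by rewrite Unat_Uw // !levs_Uw.
have E2 : count (fun k => Q (posn k)) (iota 0 j) = count (fun k => Q (posn k)) (iota 0 n).
  rewrite (count_split _ (ltnW jn)) (@count0 _ (iota j (n - j))) ?addn0 // => k.
  rewrite mem_iota => /andP[h1 h2]; apply/negP => /andP[/Prel_key h _].
  have kn : k < n by lia.
  have := rkn_mono (posn_lt kn) h; rewrite (rkn_posn kn) (rkn_posn jn); lia.
rewrite E1 E2 count_posn /cval.
case: (eqVneq (W p) 0) => [e|ne].
  by apply: count0 => x _; apply/negP => /andP[/Prel_W]; rewrite e.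
rewrite (count_split _ (ltnW pn)) (@count0 _ (iota p (n - p))); last first.
  move=> x; rewrite mem_iota => /andP[h1 _]; apply/negP => /andP[].
  rewrite /Prel => /orP[h|/andP[_ h]] /eqP e; lia.
rewrite addn0; apply: eq_in_count => x; rewrite mem_iota /= => xp.
rewrite /Q /Prel; case: (eqVneq (W x) (W p).-1) => [e|e]; rewrite ?andbF //.
by rewrite andbT e prednK ?lt0n // eqxx xp; apply/orP; right.
Qed.

Definition Tq r := [seq W k | k <- iota 0 n & rkn k < r].
Definition Ap p := [seq W k | k <- iota 0 p & W k <= W p].
Definition Bp p := [seq W k | k <- iota p.+1 (n - p.+1) & W k < W p].

Lemma Tsplit {r} : r < n ->
  Tq r = Ap (posn r) ++ Bp (posn r) /\ Tq r.+1 = Ap (posn r) ++ W (posn r) :: Bp (posn r).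
Proof.
move=> rn; set p := posn r; have pn : p < n by apply: posn_lt.
have rp : rkn p = r by apply: rkn_posn.
have I : iota 0 n = iota 0 p ++ p :: iota p.+1 (n - p.+1).
  have -> : iota 0 n = iota 0 (p + (n - p.+1).+1) by congr iota; lia.
  by rewrite iotaD.
have key : forall k, k < n -> k != p -> (rkn k < r.+1) = keylt k p /\ (rkn k < r) = keylt k p.
  move=> k kn kp.
  have ne : (rkn k == rkn p) = false by apply/eqP => e; move: kp; rewrite (rkn_inj kn pn e) eqxx.
  by rewrite -rp ltnS leq_eqVlt ne /= rkn_ltE.
rewrite /Tq; rewrite I !filter_cat !map_cat /= rp ltnn ltnSn /=.
have EA : forall q, q = r \/ q = r.+1 -> [seq k <- iota 0 p | rkn k < q] = [seq k <- iota 0 p | W k <= W p].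
  move=> q hq; apply: eq_in_filter => k; rewrite mem_iota add0n /= => kp.
  have [h1 h2] := key k (ltn_trans kp pn) (negbT (ltn_eqF kp)).
  by case: hq => ->; [rewrite h2|rewrite h1]; rewrite /keylt kp andbT orbC -leq_eqVlt.
have EB : forall q, q = r \/ q = r.+1 -> [seq k <- iota p.+1 (n - p.+1) | rkn k < q] = [seq k <- iota p.+1 (n - p.+1) | W k < W p].
  move=> q hq; apply: eq_in_filter => k; rewrite mem_iota /= => /andP[pk kn'].
  have kn : k < n by lia.
  have [h1 h2] := key k kn (negbT (gtn_eqF pk)).
  by case: hq => ->; [rewrite h2|rewrite h1]; rewrite /keylt (_ : (k < p) = false) ?andbF ?orbF //; apply/negbTE; rewrite -leqNgt ltnW.
by rewrite (EA r) ?(EB r) ?(EA r.+1) ?(EB r.+1); auto.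
Qed.

Lemma insert_main p : p < n -> insert_step (W p) (cval p) (Ap p ++ Bp p) = Ap p ++ W p :: Bp p.
Proof.
move=> pn.
have HB : find (fun x => x != W p) (Bp p) = 0.
  apply: find_lt; rewrite /Bp all_map; apply/allP => k; rewrite mem_filter.
  by case/andP.
rewrite /cval; case: (eqVneq (W p) 0) => [e|ne].
  rewrite e in HB *; apply: insert_zero => //; rewrite /Ap all_map; apply/allP => k; rewrite mem_filter.
  by case/andP => h _ /=; rewrite e in h; apply/eqP; lia.
have a0 : 0 < W p by rewrite lt0n.
have W00 : W 0 = 0 by apply: W0; lia.
have ex : exists2 k, k < p & (fun k => W k == (W p).-1) k.
  have [k' hk' e] : exists2 k', 0 <= k' < p & W k' = (W p).-1.
    by apply: interm => //; lia.
  by exists k'; [lia | rewrite /= e].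
have [q [q1 /eqP q2 q3]] := @last_occ (fun k => W k == (W p).-1) p ex.
have hge : forall k, q < k -> k < p -> W p <= W k.
  move=> k h1 h2; rewrite leqNgt; apply/negP => h.
  have [k' hk' e] : exists2 k', k <= k' < p & W k' = (W p).-1.
    by apply: interm => //; lia.
  by have := q3 k' (leq_trans h1 (proj1 (andP hk'))) (proj2 (andP hk')); rewrite /= e eqxx.
have Is : iota 0 p = iota 0 q ++ q :: iota q.+1 (p - q.+1).
  have -> : iota 0 p = iota 0 (q + (p - q.+1).+1) by congr iota; lia.
  by rewrite iotaD.
set A1 := [seq W k | k <- iota 0 q & W k <= W p].
set A2 := [seq W k | k <- iota q.+1 (p - q.+1) & W k <= W p].
have HA : Ap p = A1 ++ (W p).-1 :: A2.
  by rewrite /Ap Is filter_cat map_cat /= q2 leq_pred /= q2.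
have HA2 : all (pred1 (W p)) A2.
  rewrite all_map; apply/allP => k; rewrite mem_filter mem_iota => /andP[h1 /andP[h2 h3]] /=.
  have h4 := hge k h2 (ltac:(lia)); apply/eqP; lia.
have Hc : count (fun k => W k == (W p).-1) (iota 0 p) = (count (pred1 (W p).-1) A1).+1.
  rewrite Is count_cat /= q2 eqxx (@count0 _ (iota q.+1 _)); last first.
    by move=> k; rewrite mem_iota => /andP[h1 h2]; apply: q3 => //; lia.
  rewrite count_map count_filter addn0 addn1; congr _.+1; apply: eq_count => k /=.
  by case: eqP => //= ->; rewrite leq_pred.
rewrite HA Hc -catA /=.
by rewrite -catA /=; apply: insert_pos.
Qed.

Lemma qrec_Uw r : r < n -> qrec R L r = Tq r.+1.
Proof.
elim: r => [|r IH] rn /=.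
  have [h1 h2] := Tsplit rn.
  have e0 : Tq 0 = [::] by rewrite /Tq (@eq_filter _ _ pred0) ?filter_pred0.
  rewrite e0 in h1; rewrite h2.
  have -> : Ap (posn 0) = [::] by case: (Ap (posn 0)) h1.
  have -> : Bp (posn 0) = [::] by case: (Bp (posn 0)) h1 => //; case: (Ap (posn 0)).
  have := levs_Uw rn; rewrite nth_levs // /lev_next big_ord0 => <- //.
have [h1 h2] := Tsplit rn.
rewrite IH 1?ltnW // h1 h2 levs_Uw // Ccount_Uw //.
exact: insert_main (posn_lt rn).
Qed.

Lemma qU_Uw : 0 < n -> qU Uw = w.
Proof.
move=> n0; rewrite /qU qrec_Uw ?prednK // ?ltn_predL //.
rewrite /Tq (@eq_in_filter _ _ predT); last by move=> k; rewrite mem_iota /= => /rkn_lt.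
rewrite filter_predT; case: Hw => <- _.
exact: (mkseq_nth 0 w).
Qed.

End Core.

Section Rigid.
Variable n : nat.

Definition D (U : rel 'I_n) (j : 'I_n) := count (fun i => U i j) (enum 'I_n).

Definition pform (U : rel 'I_n) :=
  (forall k' k j : 'I_n, k' <= k -> U k j -> U k' j) /\
  (forall k j j' : 'I_n, j <= j' -> U k j -> U k j').

Lemma count_prefix (P : pred nat) m :
  (forall k k', k' <= k -> k < m -> P k -> P k') ->
  forall k, k < m -> P k = (k < count P (iota 0 m)).
Proof.
move=> H k km; rewrite (@count_split P m k.+1) //.
case Pk: (P k).
  have -> : count P (iota 0 k.+1) = k.+1.
    rewrite (@eq_in_count _ _ predT) ?count_predT ?size_iota // => j.
    by rewrite mem_iota => /andP[_ h]; apply: H Pk; lia.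
  by symmetry; apply/idP; lia.
rewrite (@count0 _ (iota k.+1 _)); last first.
  move=> j; rewrite mem_iota => /andP[h1 h2]; apply/negP => Pj.
  by have := H j k (ltnW h1) (ltac:(lia)) Pj; rewrite Pk.
rewrite (@count_split P k.+1 k) // subSnn /= Pk /= !addn0.
have h := count_size P (iota 0 k); rewrite size_iota in h.
by apply/esym/negbTE; rewrite -leqNgt.
Qed.

Lemma Unat_ordn (U : rel 'I_n) k (j : 'I_n) (kn : k < n) : Unat U k j = U (Ordinal kn) j.
Proof. by rewrite -Unat_ord. Qed.

Lemma D_prefix {U : rel 'I_n} : pform U -> forall i j, U i j = (i < D U j).
Proof.
move=> [P1 _] i j.
have -> : D U j = count (fun k => Unat U k j) (iota 0 n).
  by rewrite /D -val_enum_ord count_map; apply: eq_count => k /=; rewrite Unat_ord.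
rewrite -(@Unat_ord n U i j); apply: count_prefix (ltn_ord i).
move=> k k' h km; rewrite (Unat_ordn U k j km) (Unat_ordn U k' j (leq_ltn_trans h km)).
exact: P1.
Qed.

Lemma D_mono {U : rel 'I_n} : pform U -> forall i j : 'I_n, i <= j -> D U i <= D U j.
Proof. by move=> [_ P2] i j h; apply: sub_count => k /=; apply: P2. Qed.

Lemma D_le (U : rel 'I_n) : pform U -> (forall i j, U i j -> i < j) -> forall j : 'I_n, D U j <= j.
Proof.
move=> pU lt j; rewrite leqNgt; apply/negP => h.
by have := lt j j; rewrite (D_prefix pU) h ltnn => /(_ isT).
Qed.

Lemma D_le_n (U : rel 'I_n) j : D U j <= n.
Proof. by rewrite /D; have := count_size (fun i => U i j) (enum 'I_n); rewrite size_enum_ord. Qed.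

Lemma perm_enum_f {f : 'I_n -> 'I_n} : bijective f -> perm_eq (map f (enum 'I_n)) (enum 'I_n).
Proof.
move=> bf; apply: uniq_perm; first by rewrite map_inj_uniq ?enum_uniq //; apply: bij_inj.
  exact: enum_uniq.
case: bf => g fg gf x; rewrite mem_enum; apply/mapP; exists (g x); by rewrite ?mem_enum ?gf.
Qed.

Lemma sorted_D {U : rel 'I_n} : pform U -> sorted leq (map (D U) (enum 'I_n)).
Proof.
move=> pU; rewrite sorted_map.
have : sorted (relpre val ltn) (enum 'I_n) by rewrite -sorted_map val_enum_ord iota_ltn_sorted.
apply: sub_sorted => i j /= h; apply: D_mono => //; exact: ltnW.
Qed.

Lemma mono_perm_eq {D1 D2 : 'I_n -> nat} {f : 'I_n -> 'I_n} :
  bijective f -> (forall j, D1 j = D2 (f j)) ->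
  sorted leq (map D1 (enum 'I_n)) -> sorted leq (map D2 (enum 'I_n)) -> D1 =1 D2.
Proof.
move=> bf E s1 s2 j.
have P : perm_eq (map D1 (enum 'I_n)) (map D2 (enum 'I_n)).
  rewrite (eq_map E) map_comp; apply: perm_map; exact: perm_enum_f.
move: (congr1 (nth 0 ^~ j) (sorted_eq leq_trans anti_leq s1 s2 P)).
rewrite !(nth_map j) ?size_enum_ord //.
  by rewrite -enumT (nth_ord_enum j j).
by rewrite -enumT size_enum_ord.
Qed.

Lemma rigid (U1 U2 : rel 'I_n) (f : 'I_n -> 'I_n) :
  pform U1 -> pform U2 -> bijective f -> (forall i j, U1 i j = U2 (f i) (f j)) ->
  forall i j, U1 i j = U2 i j.
Proof.
move=> p1 p2 bf H.
have E : forall j, D U1 j = D U2 (f j).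
  move=> j; rewrite /D (eq_count (a2 := fun i => U2 (f i) (f j))); last by move=> i; apply: H.
  by rewrite -(count_map f (fun i => U2 i (f j))) (permP (perm_enum_f bf)).
have ED := mono_perm_eq bf E (sorted_D p1) (sorted_D p2).
by move=> i j; rewrite (D_prefix p1) (D_prefix p2) ED.
Qed.

End Rigid.

Arguments D {n}.
Arguments pform {n}.
Arguments D_prefix {n U}.
Arguments D_mono {n U}.
Arguments D_le {n U}.
Arguments D_le_n {n}.
Arguments rigid {n}.

Lemma uio_props n (U : rel 'I_n) : unit_interval_order U ->
  pform U /\ (forall i j, U i j -> i < j).
Proof.
case=> x [H1 H2]; split; first split.
- move=> k' k j h /H2 h2; apply/H2; have := H1 _ _ h; lra.
- move=> k j j' h /H2 h2; apply/H2; have := H1 _ _ h; lra.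
- move=> i j /H2 h; rewrite ltnNge; apply/negP => /H1 h'; lra.
Qed.

Lemma Uw_pform n w : pform (Uw n w).
Proof. split; [exact: Uw_down | exact: Uw_up]. Qed.

Section Count.
Variable n : nat.
Local Notation T := {ffun 'I_n -> 'I_n.+1}.

Definition tw (t : T) : seq nat := [seq val (t i) | i <- enum 'I_n].

Lemma size_tw t : size (tw t) = n.
Proof. by rewrite size_map size_enum_ord. Qed.

Lemma nth_tw t (i : 'I_n) : nth 0 (tw t) i = t i.
Proof. by rewrite (nth_map i) ?size_enum_ord // nth_ord_enum. Qed.

Definition areab (w : seq nat) :=
  [&& size w == n, (0 < n) ==> (nth 0 w 0 == 0) &
      [forall i : 'I_n, (0 < i) ==> (nth 0 w i <= (nth 0 w i.-1).+1)]].

Lemma areaP w : reflect (area_seq n w) (areab w).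
Proof.
apply: (iffP and3P) => [[/eqP h1 /implyP h2 /forallP h3]|[h1 [h2 h3]]].
  split=> //; split; first by move=> h; apply/eqP/h2.
  by move=> i i0 iN; have := h3 (Ordinal iN); rewrite /= i0.
split; first by rewrite h1.
  by apply/implyP => h; rewrite h2.
by apply/forallP => i; apply/implyP => i0; apply: h3.
Qed.

Definition SA := [set t : T | areab (tw t)].
Definition SM := [set h : T | [forall i : 'I_n, forall j : 'I_n, (i <= j) ==> (h i <= h j)]
                               && [forall j : 'I_n, h j <= j]].

Definition Phi (t : T) : T := [ffun j : 'I_n => inord (D (Uw n (tw t)) j)].
Definition psi (h : T) : T := [ffun j : 'I_n => inord (j - h j)].

Lemma inord_val_eq (a b : nat) : a <= n -> b <= n -> inord a = inord b :> 'I_n.+1 -> a = b.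
Proof. by move=> ha hb /(congr1 (@nat_of_ord _)); rewrite !inordK. Qed.

Lemma card_SM_SA : #|SM| <= #|SA|.
Proof.
rewrite -(@card_in_imset _ _ psi).
  apply: subset_leq_card; apply/subsetP => _ /imsetP[h hS ->].
  move: hS; rewrite inE => /andP[/forallP hm /forallP hl].
  have E : forall i : 'I_n, nth 0 (tw (psi h)) i = i - h i.
    by move=> i; rewrite nth_tw ffunE inordK //; have := ltn_ord i; lia.
  rewrite inE; apply/areaP; split; first exact: size_tw.
  split.
    move=> n0; have := E (Ordinal n0); rewrite /= => ->; lia.
  move=> i i0 iN; rewrite (E (Ordinal iN)) /=.
  have iN' : i.-1 < n by lia.
  rewrite (E (Ordinal iN')) /=.
  have := hl (Ordinal iN); have := hl (Ordinal iN'); have := forallP (hm (Ordinal iN')) (Ordinal iN).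
  rewrite /= => /implyP; rewrite leq_pred => /(_ isT); lia.
move=> h1 h2; rewrite !inE => /andP[_ /forallP l1] /andP[_ /forallP l2] e.
apply/ffunP => j; apply: val_inj.
have jn := ltn_ord j; have := l1 j; have := l2 j.
have := congr1 (fun t : T => val (t j)) e; rewrite !ffunE /= !inordK; lia.
Qed.

Lemma Phi_SM t : Phi t \in SM.
Proof.
have [pU ltU] : pform (Uw n (tw t)) /\ (forall i j, Uw n (tw t) i j -> i < j).
  by split; [exact: Uw_pform | exact: Uw_lt].
have bnd : forall j, D (Uw n (tw t)) j < n.+1 by move=> j; rewrite ltnS D_le_n.
rewrite inE; apply/andP; split.
  apply/forallP => i; apply/forallP => j; apply/implyP => ij.
  by rewrite !ffunE !inordK //; apply: D_mono.
by apply/forallP => j; rewrite ffunE inordK //; apply: D_le.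
Qed.

Lemma Phi_inj : {in SA &, injective Phi}.
Proof.
move=> t1 t2; rewrite !inE => /areaP a1 /areaP a2 e.
have ED : forall j, D (Uw n (tw t1)) j = D (Uw n (tw t2)) j.
  move=> j; apply: (@inord_val_eq _ _ (D_le_n _ _) (D_le_n _ _)).
  by have := congr1 (fun t : T => t j) e; rewrite !ffunE.
have EU : Uw n (tw t1) = Uw n (tw t2).
  apply: functional_extensionality => i; apply: functional_extensionality => j.
  by rewrite (D_prefix (Uw_pform _ _)) (D_prefix (Uw_pform _ _)) ED.
case: (posnP n) => [n0|n0].
  by apply/ffunP => j; move: (ltn_ord j); rewrite {2}n0.
have ew : tw t1 = tw t2 by rewrite -(qU_Uw _ _ a1 n0) -(qU_Uw _ _ a2 n0) EU.
apply/ffunP => j; apply: val_inj.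
by rewrite -[LHS]nth_tw -[RHS]nth_tw ew.
Qed.

Lemma surj (g : 'I_n -> nat) : (forall i j : 'I_n, i <= j -> g i <= g j) ->
  (forall j : 'I_n, g j <= j) ->
  exists w, area_seq n w /\ forall j, D (Uw n w) j = g j.
Proof.
move=> gm gl.
have sub : Phi @: SA \subset SM by apply/subsetP => _ /imsetP[t _ ->]; apply: Phi_SM.
have card : #|Phi @: SA| = #|SM|.
  apply/eqP; rewrite eqn_leq subset_leq_card // (card_in_imset Phi_inj).
  exact: card_SM_SA.
have eqS := subset_cardP card sub.
pose G : T := [ffun j : 'I_n => inord (g j)].
have GS : G \in SM.
  rewrite inE; apply/andP; split.
    apply/forallP => i; apply/forallP => j; apply/implyP => ij.
    rewrite !ffunE !inordK ?gm //; [have := gl j|have := gl i]; have := ltn_ord j; have := ltn_ord i; lia.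
  apply/forallP => j; rewrite ffunE inordK ?gl //; have := gl j; have := ltn_ord j; lia.
move: GS; rewrite -eqS => /imsetP[t tS e].
exists (tw t); split; first by move: tS; rewrite inE => /areaP.
move=> j; apply: (@inord_val_eq _ _ (D_le_n _ _)).
  have := gl j; have := ltn_ord j; lia.
by have := congr1 (fun t : T => t j) e; rewrite !ffunE => ->.
Qed.

End Count.

Arguments uio_props {n U}.
Arguments surj {n g}.

Theorem mainTheorem6 (n : nat) (U : rel 'I_n) :
  0 < n -> unit_interval_order U ->
  forall w : seq nat, (area_seq n w /\ poset_iso U (Prel w)) <-> w = qU U.
Proof.
move=> n0 HU w.
have [pU ltU] := uio_props HU.
have [w0 [a0 E0]] := surj (D_mono pU) (D_le pU ltU).
have EU : U = Uw n w0.
  apply: functional_extensionality => i; apply: functional_extensionality => j.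
  by rewrite (D_prefix pU) (D_prefix (Uw_pform _ _)) E0.
split.
  move=> [aw [f [bf Hf]]].
  have R := @rigid n U (Uw n w) (rk n w \o f) pU (Uw_pform _ _)
              (bij_comp (injF_bij (@rk_inj n w)) bf).
  have EU' : U = Uw n w.
    apply: functional_extensionality => i; apply: functional_extensionality => j.
    by apply: R => a b; rewrite Hf /Uw /= !pos_rk.
  by rewrite EU' qU_Uw.
move=> ->; rewrite EU qU_Uw //; split=> //.
exists (posI n w0); split.
  by exists (rk n w0); [move=> i; apply: rk_pos | move=> i; apply: pos_rk].
by [].
Qed.
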